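(* Let $\mathcal{M}\subseteq\mathbb{S}^n$ be any set. The following are equivalent: (1) $\mathcal{S}(\mathcal{M})$ is rank-one generated; (2) every face of $\mathcal{S}(\mathcal{M})$ is rank-one generated; (3) $\mathcal{S}(\mathcal{M})\cap\mathcal{T}(\mathcal{M}')$ is rank-one generated for every $\mathcal{M}'\subseteq\mathcal{M}$.
   Context: $\mathbb{S}^n$ denotes real symmetric $n\times n$ matrices with $\langle A,B\rangle=\mathrm{tr}(AB)$, $\mathbb{S}^n_+$ the PSD cone. For $\mathcal{M}\subseteq\mathbb{S}^n$, $\mathcal{S}(\mathcal{M})=\{X\in\mathbb{S}^n_+:\langle M,X\rangle\ge0\ \forall M\in\mathcal{M}\}$ and $\mathcal{T}(\mathcal{M})=\{X\in\mathbb{S}^n_+:\langle M,X\rangle=0\ \forall M\in\mathcal{M}\}$ (so $\mathcal{T}(\emptyset)=\mathbb{S}^n_+$). A closed convex cone $\mathcal{S}\subseteq\mathbb{S}^n_+$ is rank-one generated (ROG) if $\mathcal{S}=\mathrm{conv}(\mathcal{S}\cap\{xx^\top:x\in\mathbb{R}^n\})$. *)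

(* Defs.v *)
From HB Require Import structures.
From mathcomp Require Import all_boot all_order all_algebra.
From mathcomp Require Import classical_sets reals.
Set Implicit Arguments. Unset Strict Implicit. Unset Printing Implicit Defensive.
Import Order.TTheory GRing.Theory Num.Theory.
Local Open Scope ring_scope.
Local Open Scope classical_set_scope.

Section Defs.
Variables (R : realType) (n : nat).

Definition symm_mx (X : 'M[R]_n) : Prop := X^T = X.

Definition frob (A B : 'M[R]_n) : R := \tr (A *m B).

Definition psd : set 'M[R]_n :=
  [set X | symm_mx X /\ forall x : 'cV[R]_n, 0 <= (x^T *m X *m x) 0 0].

Definition Scone (M : set 'M[R]_n) : set 'M[R]_n :=
  [set X | psd X /\ forall A, M A -> 0 <= frob A X].

Definition Tcone (M : set 'M[R]_n) : set 'M[R]_n :=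
  [set X | psd X /\ forall A, M A -> frob A X = 0].

Definition rank_one_mats : set 'M[R]_n := [set X | exists x : 'cV[R]_n, X = x *m x^T].

Definition conv (A : set 'M[R]_n) : set 'M[R]_n :=
  [set X | exists (k : nat) (lam : 'I_k -> R) (P : 'I_k -> 'M[R]_n),
     (forall i, 0 <= lam i) /\ \sum_(i < k) lam i = 1 /\
     (forall i, A (P i)) /\ X = \sum_(i < k) lam i *: P i].

Definition convex_set (C : set 'M[R]_n) : Prop :=
  forall x y (t : R), C x -> C y -> 0 <= t <= 1 -> C (t *: x + (1 - t) *: y).

Definition face (F C : set 'M[R]_n) : Prop :=
  F `<=` C /\ convex_set F /\
  forall x y (t : R), C x -> C y -> 0 < t < 1 -> F (t *: x + (1 - t) *: y) ->
    F x /\ F y.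

Definition ROG (S : set 'M[R]_n) : Prop := S = conv (S `&` rank_one_mats).

End Defs.

(* Main.v *)
Require Import Defs.
From HB Require Import structures.
From mathcomp Require Import all_boot all_order all_algebra.
From mathcomp Require Import classical_sets reals.
Import Order.TTheory GRing.Theory Num.Theory.
Local Open Scope ring_scope.
Local Open Scope classical_set_scope.

Section Aux.
Variables (R : realType) (n : nat).
Implicit Types (C F A : set 'M[R]_n).

Lemma split_sum k (lam : 'I_k.+1 -> R) (P : 'I_k.+1 -> 'M[R]_n) :
  \sum_(i < k.+1) lam i *: P i =
  \sum_(i < k) lam (widen_ord (leqnSn k) i) *: P (widen_ord (leqnSn k) i)
  + lam ord_max *: P ord_max.
Proof. by rewrite big_ord_recr. Qed.

Lemma zero_part k (lam : 'I_k -> R) (P : 'I_k -> 'M[R]_n) :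
  (forall i, 0 <= lam i) -> \sum_(i < k) lam i = 0 ->
  (forall i, lam i = 0) /\ \sum_(i < k) lam i *: P i = 0.
Proof.
move=> l0 s0.
have H : forall i, lam i = 0.
  move=> i; exact: (psumr_eq0P (fun i _ => l0 i) s0).
split=> //; apply: big1 => i _; by rewrite H scale0r.
Qed.

Lemma rescale k (lam : 'I_k -> R) (P : 'I_k -> 'M[R]_n) (s : R) :
  s != 0 ->
  \sum_(i < k) lam i *: P i = s *: \sum_(i < k) (lam i / s) *: P i.
Proof.
move=> s0; rewrite scaler_sumr; apply: eq_bigr => i _.
by rewrite scalerA mulrC -mulrA mulVf // mulr1.
Qed.

Lemma conv_sub C A : convex_set C -> A `<=` C -> conv A `<=` C.
Proof.
move=> cC AC X [k [lam [P [l0 [l1 [PA ->]]]]]].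
elim: k lam P l0 l1 PA => [|k IH] lam P l0 l1 PA.
  by move: l1; rewrite big_ord0 => /eqP; rewrite eq_sym oner_eq0.
rewrite split_sum; rewrite big_ord_recr /= in l1.
set lam' := fun i : 'I_k => lam (widen_ord (leqnSn k) i).
set P' := fun i : 'I_k => P (widen_ord (leqnSn k) i).
change (\sum_(i < k) lam' i + lam ord_max = 1) in l1.
have s0 : 0 <= \sum_(i < k) lam' i by apply: sumr_ge0 => i _; exact: l0.
have [seq0|sne0] := eqVneq (\sum_(i < k) lam' i) 0.
  have [_ ->] := @zero_part k lam' P' (fun i => l0 _) seq0.
  move: l1; rewrite seq0 add0r => ->; rewrite add0r scale1r; exact: AC.
have hin : C (\sum_(i < k) (lam' i / \sum_(i < k) lam' i) *: P' i).
  apply: IH => //.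
  - by move=> i0; apply: divr_ge0 => //; exact: l0.
  - by rewrite -mulr_suml mulfV.
  - by move=> i; exact: PA.
rewrite (@rescale k lam' P' _ sne0).
have -> : lam ord_max = 1 - \sum_(i < k) lam' i by rewrite -l1 addrC addKr.
apply: cC => //; first exact: AC.
rewrite s0 /= -subr_ge0 -[X in _ <= X - _]l1 addrC addKr; exact: l0.
Qed.

Lemma face_comb C F : convex_set C -> face F C ->
  forall k (lam : 'I_k -> R) (P : 'I_k -> 'M[R]_n),
  (forall i, 0 <= lam i) -> \sum_(i < k) lam i = 1 -> (forall i, C (P i)) ->
  F (\sum_(i < k) lam i *: P i) -> forall i, 0 < lam i -> F (P i).
Proof.
move=> cC [FC [cF fF]] k; elim: k => [|k IH] lam P l0 l1 PC FX.
  by case.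
have Hi : forall i : 'I_k.+1, i = ord_max \/ exists j : 'I_k, i = widen_ord (leqnSn k) j.
  move=> i; case: (unliftP ord_max i) => [j ->|->]; last by left.
  by right; exists j; apply: val_inj; rewrite /= /bump leqNgt ltn_ord.
move: FX; rewrite split_sum; rewrite big_ord_recr /= in l1.
set lam' := fun i : 'I_k => lam (widen_ord (leqnSn k) i).
set P' := fun i : 'I_k => P (widen_ord (leqnSn k) i).
change (\sum_(i < k) lam' i + lam ord_max = 1) in l1.
have s0 : 0 <= \sum_(i < k) lam' i by apply: sumr_ge0 => i _; exact: l0.
have [seq0|sne0] := eqVneq (\sum_(i < k) lam' i) 0.
  have [z0 ->] := @zero_part k lam' P' (fun i => l0 _) seq0.
  move: l1; rewrite seq0 add0r => ->; rewrite add0r scale1r => FP i li.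
  case: (Hi i) => [->//|[j ej]].
  by move: li; rewrite ej -/(lam' j) z0 ltxx.
have [m0|mne0] := eqVneq (lam ord_max) 0.
  rewrite m0 scale0r addr0 => FX i li.
  case: (Hi i) => [ei|[j ej]]; first by move: li; rewrite ei m0 ltxx.
  rewrite ej; apply: (IH lam' P') => //.
  - by move=> ?; exact: l0.
  - by rewrite -l1 m0 addr0.
  - by move=> ?; exact: PC.
  - by move: li; rewrite ej.
have hin : C (\sum_(i < k) (lam' i / \sum_(i < k) lam' i) *: P' i).
  apply: (@conv_sub C C cC) => //.
  exists k, (fun i => lam' i / \sum_(i < k) lam' i), P'; split.
    by move=> i0; apply: divr_ge0 => //; exact: l0.
  split; first by rewrite -mulr_suml mulfV.
  by split => // i0; exact: PC.
have eX : \sum_(i < k) lam (widen_ord (leqnSn k) i) *: P (widen_ord (leqnSn k) i)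
  = (\sum_(i < k) lam' i) *: \sum_(i < k) (lam' i / \sum_(i < k) lam' i) *: P' i
  := @rescale k lam' P' _ sne0.
rewrite eX.
have em : lam ord_max = 1 - \sum_(i < k) lam' i by rewrite -l1 addrC addKr.
rewrite em => FX.
have spos : 0 < \sum_(i < k) lam' i by rewrite lt_def sne0 s0.
have mpos : 0 < lam ord_max by rewrite lt_def mne0 l0.
have t01 : 0 < \sum_(i < k) lam' i < 1 by rewrite spos /= -subr_gt0 -em.
have [Fin Fmax] := fF _ _ _ hin (PC _) t01 FX.
move=> i li; case: (Hi i) => [->//|[j ej]].
rewrite ej; apply: (IH (fun i => lam' i / \sum_(i < k) lam' i) P') => //.
- by move=> ?; apply: divr_ge0 => //; exact: l0.
- by rewrite -mulr_suml mulfV.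
- by move=> ?; exact: PC.
- by apply: divr_gt0 => //; move: li; rewrite ej.
Qed.

Lemma face_ROG C F : convex_set C -> ROG C -> face F C -> ROG F.
Proof.
move=> cC rC fFC; have [FC [cF fF]] := fFC.
rewrite /ROG; apply/seteqP; split; last first.
  by apply: conv_sub => //; exact: subIsetl.
move=> X FX.
have : conv (C `&` @rank_one_mats R n) X by rewrite -rC; exact: FC.
move=> [k [lam [P [l0 [l1 [PA eX]]]]]].
have [j lj] : exists j, 0 < lam j.
  case: (boolP [exists j, 0 < lam j]) => [/existsP //|/existsPn H].
  move: l1; rewrite big1 => [|i _]; first by move/eqP; rewrite eq_sym oner_eq0.
  by apply/eqP; rewrite eq_le l0 andbT leNgt H.
have Fi : forall i, 0 < lam i -> F (P i).
  move=> i li; apply: (@face_comb C F cC fFC k lam P l0 l1 _ _ i li) => [i0|]; first by case: (PA i0).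
  by rewrite -eX.
exists k, lam, (fun i => if 0 < lam i then P i else P j).
split => //; split => //; split.
  move=> i; case: ifP => h; split; by [apply: Fi | case: (PA i) | case: (PA j)].
rewrite eX; apply: eq_bigr => i _; case: ifP => // h.
have -> : lam i = 0 by apply/eqP; rewrite eq_le l0 andbT leNgt h.
by rewrite !scale0r.
Qed.

Lemma frob_lin (A X Y : 'M[R]_n) a b :
  frob A (a *: X + b *: Y) = a * frob A X + b * frob A Y.
Proof. by rewrite /frob mulmxDr -!scalemxAr mxtraceD !mxtraceZ. Qed.

Lemma quad_lin (x : 'cV[R]_n) (X Y : 'M[R]_n) a b :
  (x^T *m (a *: X + b *: Y) *m x) 0 0 =
  a * (x^T *m X *m x) 0 0 + b * (x^T *m Y *m x) 0 0.
Proof. by rewrite mulmxDr mulmxDl -!scalemxAr -!scalemxAl !mxE. Qed.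

Lemma Scone_convex (M : set 'M[R]_n) : convex_set (Scone M).
Proof.
move=> X Y t [[sX qX] fX] [[sY qY] fY] /andP [t0 t1].
have t1' : 0 <= 1 - t by rewrite subr_ge0.
split; first split.
- by rewrite /symm_mx linearD !linearZ /= sX sY.
- by move=> x; rewrite quad_lin addr_ge0 // mulr_ge0.
- by move=> A MA; rewrite frob_lin addr_ge0 // mulr_ge0 // ?fX ?fY.
Qed.

End Aux.

Theorem lemma2p10 (R : realType) (n : nat) (M : set 'M[R]_n)
  (HM : forall A, M A -> symm_mx A) :
  (ROG (Scone M) <-> (forall F, face F (Scone M) -> ROG F)) /\
  (ROG (Scone M) <->
     (forall M' : set 'M[R]_n, M' `<=` M -> ROG (Scone M `&` Tcone M'))).
Proof.
have cS := @Scone_convex R n M.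
have fS : face (Scone M) (Scone M).
  by split => //; split => // x y t Sx Sy _ _.
have fT : forall M' : set 'M[R]_n, M' `<=` M -> face (Scone M `&` Tcone M') (Scone M).
  move=> M' sub; split; first exact: subIsetl.
  split.
    move=> X Y t [SX [_ TX]] [SY [_ TY]] t01.
    have SZ := cS _ _ _ SX SY t01.
    split => //; split; first by case: SZ.
    by move=> A MA; rewrite frob_lin TX // TY // !mulr0 addr0.
  move=> X Y t SX SY /andP [t0 t1] [SZ [_ TZ]].
  have t1' : 0 < 1 - t by rewrite subr_gt0.
  have H : forall A, M' A -> frob A X = 0 /\ frob A Y = 0.
    move=> A MA; have e := TZ A MA; rewrite frob_lin in e.
    have hx : 0 <= frob A X by case: SX => _; apply; exact: sub.
    have hy : 0 <= frob A Y by case: SY => _; apply; exact: sub.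
    have ha : 0 <= t * frob A X by rewrite mulr_ge0 // ltW.
    have hb : 0 <= (1 - t) * frob A Y by rewrite mulr_ge0 // ltW.
    move/eqP: e; rewrite paddr_eq0 // => /andP [].
    by rewrite !mulf_eq0 (gt_eqF t0) (gt_eqF t1') /= => /eqP -> /eqP ->.
  split; (split; [done|split]).
  - by case: SX.
  - by move=> A MA; case: (H A MA).
  - by case: SY.
  - by move=> A MA; case: (H A MA).
have S_eq : Scone M `&` Tcone set0 = Scone M.
  apply/seteqP; split; first exact: subIsetl.
  by move=> X SX; split => //; split; [case: SX | move=> A []].
split; split.
- by move=> rS F fF; exact: face_ROG cS rS fF.
- by move=> H; apply: H.
- by move=> rS M' sub; exact: face_ROG cS rS (fT M' sub).
- by move=> H; rewrite -S_eq; apply: H; exact: sub0set.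
Qed.
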